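(* For each $n\ge1$ and $1\le j\le n$, $p_n^a(j)$ is increasing in $a_j$: if $a,a'\in A$ satisfy $a_k=a'_k$ for all $k\ne j$ and $a_j>a'_j$, then $p_n^a(j)>p_n^{a'}(j)$.
   Context: Let $A=\{(a_1,a_2,\dots): a_j\in\{1,\dots,j\}\text{ for all }j\}$. For $a\in A$, define permutations $p_n^a\in S_n$ recursively: $p_1^a$ is the permutation of $\{1\}$; for $n\ge2$, $p_n^a(n)=a_n$ and, for $1\le i\le n-1$, $p_n^a(i)=p_{n-1}^a(i)$ if $p_{n-1}^a(i)<a_n$ and $p_n^a(i)=p_{n-1}^a(i)+1$ if $p_{n-1}^a(i)\ge a_n$. (This is the Mallows process with insertion positions $p_j(j)=a_j$.) *)

(* Defs.v *)
From mathcomp Require Import all_boot.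

(* Sequences a = (a_1, a_2, ...) are functions nat -> nat (index 0 unused).
   A = {a : a_j in {1..j} for all j >= 1}. *)
Definition inA (a : nat -> nat) : Prop := forall j, 1 <= j -> 1 <= a j <= j.

(* mallows n a i = p_n^a(i), meaningful for 1 <= i <= n (a permutation of
   {1..n} represented as a function on nat).  p_1^a = identity on {1}. *)
Fixpoint mallows (n : nat) (a : nat -> nat) (i : nat) : nat :=
  match n with
  | 0 => 0
  | 1 => 1
  | m.+1 =>
      if i == n then a n
      else let v := mallows m a i in
           if v < a n then v else v.+1
  end.

(* Main.v *)
Require Import Defs.
From mathcomp Require Import all_boot.
From mathcomp Require Import zify.
From Stdlib Require Import Lia.

Lemma mallowsS m a i : 1 <= m -> mallows m.+1 a i =
  if i == m.+1 then a m.+1 else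
  (if mallows m a i < a m.+1 then mallows m a i else (mallows m a i).+1).
Proof. by case: m. Qed.

Theorem lemma3p1 (n j : nat) (a a' : nat -> nat) :
  1 <= n -> 1 <= j <= n -> inA a -> inA a' ->
  (forall k, k != j -> a k = a' k) ->
  a' j < a j ->
  mallows n a' j < mallows n a j.
Proof.
move=> Hn /andP[Hj Hjn] HA HA' Heq Hlt.
have j2 : 2 <= j.
  case: j Hj Hjn Hlt {Heq} => [//|[|//]] _ _ Hlt.
  have := HA 1 (leqnn 1); have := HA' 1 (leqnn 1). lia.
rewrite -(subnKC Hjn).
elim: (n - j) => [|m IH].
  rewrite addn0; case: j j2 {Hj Hjn Heq} Hlt => [|[|k]] //= _.
  by rewrite eqxx.
rewrite addnS !mallowsS; try lia.
have -> : (j == (j + m).+1) = false by apply/eqP; lia.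
have -> : a' (j + m).+1 = a (j + m).+1 by rewrite Heq //; apply/eqP; lia.
set c := a (j + m).+1.
move: IH; set v' := mallows _ a' j; set v := mallows _ a j => IH.
case: ifP; case: ifP; lia.
Qed.
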